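(* Consider the multi-block primal semidefinite program $\min_{\mathbf{X}\in\mathbb{X}}\{f(\mathbf{X}):=\langle\mathbf{C},\mathbf{X}\rangle \mid \mathcal{A}(\mathbf{X})=\mathbf{b},\ \mathbf{X}\in\mathcal{K}\}$ with optimal value $f^\star$, and suppose it satisfies Slater's condition. Let $\{(\mathbf{X}^k,\mathbf{y}^k,\mathbf{S}^k)\}$ be generated by the STRIDE algorithm described in the context. Then $\{f(\mathbf{X}^k)\}$ converges to $f^\star$.
   Context: $\mathbb{X}=\mathbb{S}^{n_1}\times\cdots\times\mathbb{S}^{n_l}$ (tuples of real symmetric matrices), $\langle\mathbf{C},\mathbf{X}\rangle=\sum_i\langle\mathbf{C}_i,\mathbf{X}_i\rangle$ (trace inner product), $\mathcal{A}:\mathbb{X}\to\mathbb{R}^m$ linear, $\mathcal{K}=\mathbb{S}^{n_1}_+\times\cdots\times\mathbb{S}^{n_l}_+$, and $\mathcal{F}_P=\{\mathbf{X}\in\mathbb{X}\mid\mathcal{A}(\mathbf{X})=\mathbf{b},\ \mathbf{X}\in\mathcal{K}\}$. STRIDE: given an initial point $(\mathbf{X}^0,\mathbf{S}^0,\mathbf{y}^0)\in\mathcal{K}\times\mathcal{K}\times\mathbb{R}^m$, a constant $\epsilon>0$, and a nondecreasing sequence $\sigma_k>0$, for $k=0,1,\dots$: (1) short projected-gradient step: $\overline{\mathbf{X}}^{k+1}=\Pi_{\mathcal{F}_P}(\mathbf{X}^k-\sigma_k\mathbf{C})$, where $\Pi_{\mathcal{F}_P}$ is the Euclidean projection onto $\mathcal{F}_P$,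 also producing dual iterates $(\mathbf{S}^{k+1},\mathbf{y}^{k+1})$ of the projection problem; (2) long step: compute a candidate $\widehat{\mathbf{X}}^{k+1}\in\mathbb{X}$ (in the paper, by rounding leading eigenvectors of $\overline{\mathbf{X}}^{k+1}$ to feasible points of an underlying polynomial problem, running local nonlinear-programming search, and lifting the best local solution to a rank-one moment matrix with its localizing matrices); (3) update: $\mathbf{X}^{k+1}=\widehat{\mathbf{X}}^{k+1}$ if $f(\widehat{\mathbf{X}}^{k+1})\le f(\overline{\mathbf{X}}^{k+1})-\epsilon$ and $\widehat{\mathbf{X}}^{k+1}\in\mathcal{F}_P$, otherwise $\mathbf{X}^{k+1}=\overline{\mathbf{X}}^{k+1}$. (The iteration is stopped when KKT residuals fall below a tolerance; convergence refers to the sequence generated.) *)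

(* Defs.v *)
From HB Require Import structures.
From mathcomp Require Import all_boot all_order all_algebra.
From mathcomp Require Import all_classical all_reals all_analysis.
Set Implicit Arguments. Unset Strict Implicit. Unset Printing Implicit Defensive.
Import Order.TTheory GRing.Theory Num.Theory.
Local Open Scope ring_scope.

Section Defs.
Variable R : realType.
Variable l : nat.
Variable ns : 'I_l -> nat.

(* An element of X = S^{n_1} x ... x S^{n_l} (as a tuple of square matrices;
   symmetry is imposed separately by [bsym]). *)
Definition bmat := forall i : 'I_l, 'M[R]_(ns i).

Definition bsub (X Y : bmat) : bmat := fun i => X i - Y i.
Definition bscale (a : R) (X : bmat) : bmat := fun i => a *: X i.

Definition binner (X Y : bmat) : R := \sum_(i < l) \tr ((X i)^T *m Y i).

Definition symmx n (M : 'M[R]_n) : Prop := M^T = M.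
Definition bsym (X : bmat) : Prop := forall i, symmx (X i).

Definition psdmx n (M : 'M[R]_n) : Prop :=
  symmx M /\ forall v : 'cV[R]_n, 0 <= (v^T *m M *m v) 0 0.
Definition pdmx n (M : 'M[R]_n) : Prop :=
  symmx M /\ forall v : 'cV[R]_n, v != 0 -> 0 < (v^T *m M *m v) 0 0.

Definition inK (X : bmat) : Prop := forall i, psdmx (X i).
Definition inintK (X : bmat) : Prop := forall i, pdmx (X i).

Definition Aop m (A : 'I_m -> bmat) (X : bmat) : 'I_m -> R :=
  fun j => binner (A j) X.

Definition feasP m (A : 'I_m -> bmat) (b : 'I_m -> R) (X : bmat) : Prop :=
  (forall j, Aop A X j = b j) /\ inK X.

Definition is_proj (F : bmat -> Prop) (V P : bmat) : Prop :=
  F P /\ forall Z, F Z -> binner (bsub P V) (bsub P V) <= binner (bsub Z V) (bsub Z V).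

Definition is_optval (F : bmat -> Prop) (f : bmat -> R) (fstar : R) : Prop :=
  (forall X, F X -> fstar <= f X) /\
  (forall e : R, 0 < e -> exists X, F X /\ f X < fstar + e).

Definition slater m (A : 'I_m -> bmat) (b : 'I_m -> R) : Prop :=
  exists X0, (forall j, Aop A X0 j = b j) /\ inintK X0.

End Defs.

(* Main.v *)
Require Import Defs.
From HB Require Import structures.
From mathcomp Require Import all_boot all_order all_algebra.
From mathcomp Require Import all_classical all_reals all_analysis.
From mathcomp Require Import ring lra.
Set Implicit Arguments. Unset Strict Implicit.
Import Order.TTheory GRing.Theory Num.Theory.
Import numFieldNormedType.Exports.
Local Open Scope classical_set_scope.
Local Open Scope ring_scope.

Definition badd (R : realType) (l : nat) (ns : 'I_l -> nat) (X Y : bmat R ns) : bmat R ns :=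
  fun i => X i + Y i.

Lemma binnerDl (R : realType) (l : nat) (ns : 'I_l -> nat) (X Y W : bmat R ns) :
  binner (badd X Y) W = binner X W + binner Y W.
Proof.
rewrite /binner -big_split; apply: eq_bigr => i _ /=.
by rewrite /badd linearD /= mulmxDl mxtraceD.
Qed.

Lemma binnerBl (R : realType) (l : nat) (ns : 'I_l -> nat) (X Y W : bmat R ns) :
  binner (bsub X Y) W = binner X W - binner Y W.
Proof.
rewrite /binner -sumrB; apply: eq_bigr => i _ /=.
by rewrite /bsub linearB /= mulmxBl linearB.
Qed.

Lemma binnerZl (R : realType) (l : nat) (ns : 'I_l -> nat) (a : R) (X W : bmat R ns) :
  binner (bscale a X) W = a * binner X W.
Proof.
rewrite /binner mulr_sumr; apply: eq_bigr => i _ /=.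
by rewrite /bscale linearZ /= -scalemxAl mxtraceZ.
Qed.

Lemma binnerC (R : realType) (l : nat) (ns : 'I_l -> nat) (X Y : bmat R ns) :
  binner X Y = binner Y X.
Proof.
rewrite /binner; apply: eq_bigr => i _.
by rewrite -mxtrace_tr trmx_mul trmxK.
Qed.

Lemma binnerDr (R : realType) (l : nat) (ns : 'I_l -> nat) (X Y W : bmat R ns) :
  binner W (badd X Y) = binner W X + binner W Y.
Proof. by rewrite binnerC binnerDl !(binnerC W). Qed.

Lemma binnerBr (R : realType) (l : nat) (ns : 'I_l -> nat) (X Y W : bmat R ns) :
  binner W (bsub X Y) = binner W X - binner W Y.
Proof. by rewrite binnerC binnerBl !(binnerC W). Qed.

Lemma binnerZr (R : realType) (l : nat) (ns : 'I_l -> nat) (a : R) (X W : bmat R ns) :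
  binner W (bscale a X) = a * binner W X.
Proof. by rewrite binnerC binnerZl (binnerC W). Qed.

Lemma binner_ge0 (R : realType) (l : nat) (ns : 'I_l -> nat) (X : bmat R ns) :
  0 <= binner X X.
Proof.
apply: sumr_ge0 => i _; rewrite /mxtrace; apply: sumr_ge0 => j _.
rewrite mxE; apply: sumr_ge0 => k _; rewrite mxE -expr2; exact: sqr_ge0.
Qed.

Lemma binner_self0 (R : realType) (l : nat) (ns : 'I_l -> nat) (X Y : bmat R ns) :
  binner (bsub X X) Y = 0.
Proof. by rewrite binnerBl subrr. Qed.

Lemma feas_comb (R : realType) (l : nat) (ns : 'I_l -> nat) m (A : 'I_m -> bmat R ns) b
  (P Z : bmat R ns) (t : R) :
  feasP A b P -> feasP A b Z -> 0 <= t -> t <= 1 ->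
  feasP A b (badd P (bscale t (bsub Z P))).
Proof.
move=> [hP kP] [hZ kZ] t0 t1; split.
  move=> j; rewrite /Aop binnerDr binnerZr binnerBr.
  move: (hP j) (hZ j); rewrite /Aop => -> ->.
  by rewrite subrr mulr0 addr0.
move=> i; have [sP qP] := kP i; have [sZ qZ] := kZ i; split.
  rewrite /symmx /badd /bscale /bsub in sP sZ *.
  by rewrite linearD linearZ linearB /= sP sZ.
move=> v; rewrite /badd /bscale /bsub mulmxDr mulmxDl -scalemxAr -scalemxAl.
rewrite mulmxBr mulmxBl.
have := qP v; have := qZ v.
move: (v^T *m P i *m v) (v^T *m Z i *m v) => M1 M2.
rewrite !mxE => hc ha; nra.
Qed.

Lemma quad_lem (R : realType) (a c : R) : 0 <= c ->
  (forall t, 0 < t -> t <= 1 -> 0 <= 2 * t * a + t ^+ 2 * c) -> 0 <= a.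
Proof.
move=> c0 H; rewrite leNgt; apply/negP => a0.
have cpos : 0 < c - a by lra.
pose t := - a / (c - a).
have t0 : 0 < t by rewrite /t divr_gt0 // oppr_gt0.
have t1 : t <= 1 by rewrite /t ler_pdivrMr // mul1r; lra.
have := H t t0 t1.
have -> : 2 * t * a + t ^+ 2 * c = t * ((a * (c - 2 * a)) / (c - a)).
  rewrite /t; field; lra.
rewrite pmulr_rge0 // ler_pdivlMr // mul0r => h.
nra.
Qed.

Lemma proj_vi (R : realType) (l : nat) (ns : 'I_l -> nat) m (A : 'I_m -> bmat R ns) b
  (V P Z : bmat R ns) :
  is_proj (feasP A b) V P -> feasP A b Z -> 0 <= binner (bsub P V) (bsub Z P).
Proof.
move=> [FP hmin] FZ.
apply: (@quad_lem R _ (binner (bsub Z P) (bsub Z P))); first exact: binner_ge0.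
move=> t t0 t1.
have := hmin _ (feas_comb FP FZ (ltW t0) t1).
have -> : bsub (badd P (bscale t (bsub Z P))) V = badd (bsub P V) (bscale t (bsub Z P)).
  apply: functional_extensionality_dep => i.
  by rewrite /bsub /badd /bscale addrAC.
move: (bsub P V) (bsub Z P) => U W.
rewrite !binnerDl !binnerDr !binnerZl !binnerZr (binnerC W U).
move: (binner U U) (binner U W) (binner W W) => x y z.
move=> h; rewrite expr2; lra.
Qed.

Lemma descent (R : realType) (l : nat) (ns : 'I_l -> nat) m (A : 'I_m -> bmat R ns) b
  (C X P Z : bmat R ns) (s : R) :
  is_proj (feasP A b) (bsub X (bscale s C)) P -> feasP A b Z ->
  2 * s * (binner C P - binner C Z) <=
  binner (bsub X Z) (bsub X Z) - binner (bsub P Z) (bsub P Z) - binner (bsub P X) (bsub P X).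
Proof.
move=> hp FZ; have := proj_vi hp FZ.
rewrite !binnerBl !binnerBr ?binnerZl ?binnerZr ?binnerBl ?binnerBr.
rewrite (binnerC Z P) (binnerC Z X) (binnerC X P).
move: (binner C P) (binner C Z) (binner C X) (binner P P) (binner P Z) (binner P X)
  (binner X X) (binner X Z) (binner Z Z) => a1 a2 a3 a4 a5 a6 a7 a8 a9.
move=> h; lra.
Qed.
Theorem theorem3 (R : realType) (l : nat) (ns : 'I_l -> nat) (m : nat)
  (C : bmat R ns) (A : 'I_m -> bmat R ns) (b : 'I_m -> R) (fstar : R)
  (eps : R) (sigma : nat -> R)
  (X Xbar Xhat : nat -> bmat R ns) :
  bsym C -> (forall j, bsym (A j)) ->
  let f := binner C in
  let FP := feasP A b in
  is_optval FP f fstar ->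
  slater A b ->
  0 < eps ->
  (forall k, 0 < sigma k) ->
  (forall k, sigma k <= sigma k.+1) ->
  (forall k, bsym (Xhat k)) ->
  inK (X 0%N) ->
  (forall k, is_proj FP (bsub (X k) (bscale (sigma k) C)) (Xbar k.+1)) ->
  (forall k,
      (f (Xhat k.+1) <= f (Xbar k.+1) - eps /\ FP (Xhat k.+1) /\ X k.+1 = Xhat k.+1)
   \/ (~ (f (Xhat k.+1) <= f (Xbar k.+1) - eps /\ FP (Xhat k.+1)) /\ X k.+1 = Xbar k.+1)) ->
  (fun k => f (X k)) @ \oo --> fstar.
Proof.
intros symC symA; cbv zeta.
move=> [fopt1 fopt2] _ eps0 sig0 sigmono _ _ hproj hstep.
have feasX : forall k, feasP A b (X k.+1).
  by move=> k; case: (hstep k) => [[_ [h ->]] | [_ ->]] //; exact: (hproj k).1.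
have ge : forall k, fstar <= binner C (X k.+1) by move=> k; apply: fopt1; exact: feasX.
have barle : forall k, binner C (Xbar k.+2) <= binner C (X k.+1).
  move=> k; have := descent (hproj k.+1) (feasX k).
  rewrite binner_self0 => h.
  have h3 := binner_ge0 (bsub (Xbar k.+2) (X k.+1)).
  have h2 : 2 * sigma k.+1 * (binner C (Xbar k.+2) - binner C (X k.+1)) <= 0 by lra.
  by move: h2; rewrite pmulr_rle0 ?subr_le0 // mulr_gt0.
have mono : forall k, binner C (X k.+2) <= binner C (X k.+1).
  move=> k; case: (hstep k.+1) => [[h1 [_ ->]] | [_ ->]]; last exact: barle.
  have := barle k; lra.
have monoN : forall k n, (k <= n)%N -> binner C (X n.+1) <= binner C (X k.+1).
  move=> k; elim=> [|n IH]; first by rewrite leqn0 => /eqP ->.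
  rewrite leq_eqVlt => /orP[/eqP -> //| hk]; exact: le_trans (mono n) (IH hk).
have [K HK] : exists K, forall k, (K <= k)%N -> X k.+1 = Xbar k.+1.
  apply: contrapT => hno.
  have inf : forall K, exists k, (K <= k)%N /\
      binner C (Xhat k.+1) <= binner C (Xbar k.+1) - eps /\ X k.+1 = Xhat k.+1.
    move=> K; apply: contrapT => h; apply: hno; exists K => k hk.
    case: (hstep k) => [[h1 [_ h3]] | [_ ->]] //; exfalso; apply: h; exists k; by split.
  have down : forall j : nat, exists n, binner C (X n.+1) <= binner C (X 1%N) - j%:R * eps.
    elim=> [|j [n hn]]; first by exists 0%N; rewrite mul0r subr0.
    have [k [hk [h1 h3]]] := inf n.+1.
    exists k; rewrite h3.
    case: k hk h1 h3 => [//|k] hk h1 h3.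
    have := barle k; have := monoN n k hk; rewrite mulrSr; lra.
  have [j hj] : exists j : nat, binner C (X 1%N) - fstar < j%:R * eps.
    have g0 : 0 <= (binner C (X 1%N) - fstar) / eps.
      by apply: divr_ge0; [rewrite subr_ge0; exact: ge 0%N | exact: ltW].
    exists (Num.bound ((binner C (X 1%N) - fstar) / eps)).
    by have := archi_boundP g0; rewrite ltr_pdivrMr.
  have [n hn] := down j; have := ge n; lra.
have sigge : forall k, sigma 0%N <= sigma k.
  by elim=> [//|k IH]; exact: le_trans IH (sigmono k).
apply/cvgrPdist_lt => e e0.
have e2 : 0 < e / 2 by lra.
have [Z [FZ hZ]] := fopt2 (e/2) e2.
have [N hN] : exists N, binner C (X N.+1) <= binner C Z + e/2.
  apply: contrapT => hno.
  have big : forall N, binner C Z + e / 2 < binner C (X N.+1).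
    move=> N; rewrite ltNge; apply/negP => h; apply: hno; by exists N.
  pose D := fun k => binner (bsub (X k) Z) (bsub (X k) Z).
  have step : forall k, (K.+1 <= k)%N -> sigma 0%N * e <= D k - D k.+1.
    move=> k hk; have := descent (hproj k) FZ.
    rewrite -HK; last exact: ltnW.
    have h3 := binner_ge0 (bsub (X k.+1) (X k)).
    have hb := big k.
    have hm : sigma 0%N * (e / 2) <= sigma k * (binner C (X k.+1) - binner C Z).
      apply: ler_pM; [exact: ltW | exact: ltW | exact: sigge | lra].
    rewrite /D; lra.
  have tele : forall n, n%:R * (sigma 0%N * e) <= D K.+1 - D (K.+1 + n)%N.
    elim=> [|n IH]; first by rewrite mul0r addn0 subrr.
    have := step (K.+1 + n)%N (leq_addr _ _); rewrite addnS mulrSr; lra.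
  have Dge0 : forall k, 0 <= D k by move=> k; exact: binner_ge0.
  have se0 : 0 < sigma 0%N * e by rewrite mulr_gt0.
  have g0 : 0 <= D K.+1 / (sigma 0%N * e) by rewrite divr_ge0 // ltW.
  have := archi_boundP g0; rewrite ltr_pdivrMr // => hb.
  have := tele (Num.bound (D K.+1 / (sigma 0%N * e))).
  have := Dge0 (K.+1 + Num.bound (D K.+1 / (sigma 0%N * e)))%N.
  lra.
exists N.+1 => // n /= hn.
case: n hn => [//|n] hn.
have := monoN N n hn; have := ge n => h1 h2.
rewrite ltr_distlC; apply/andP; split; lra.
Qed.
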